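(* Fix a variable layout (numbers $M\ge1$, $N\ge0$, $M_i,N_j\ge0$, assertion variables $a_{i,k}$, $b_{j,k}$ with every $b_{j,k}$ among the $a_{i,k}$). Suppose there are distinct conjunct indices $i_0\ne i_1$ and distinct disjunct indices $j_0\ne j_1$, with disjuncts $j_0,j_1$ non-empty ($N_{j_0},N_{j_1}>0$), such that $\Pi(i_0)\not\ge\Omega(j_0)$, $\Pi(i_0)\ge\Omega(j_1)$, $\Pi(i_1)\ge\Omega(j_0)$ and $\Pi(i_1)\ge\Omega(j_1)$. Then there exist assertions $\varphi_1,\dots,\varphi_M,\psi_1,\dots,\psi_N$ containing no assertion variables such that the implication $\bigwedge_i\varphi_i*a_{i,1}*\cdots*a_{i,M_i}\Rightarrow\bigvee_j\psi_j*b_{j,1}*\cdots*b_{j,N_j}$ holds in the unary interpretation but not in the binary interpretation.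
   Context: $\mathsf{Heap}$: finite partial functions $\mathsf{PosInt}\to\mathsf{Int}$; $g\sqsubseteq h$ means $h$ extends $g$; $h\cdot g$ union of disjoint heaps; componentwise on $\mathsf{Heap}^n$. $\mathsf{IRel}_n$: upward closed subsets of $\mathsf{Heap}^n$; $p*q=\{\mathbf f\cdot\mathbf g\mid\mathbf f\in p,\mathbf g\in q,\text{componentwise disjoint}\}$; $\Delta_n(X)=\{(h_1,\dots,h_n)\mid\exists f\in X.\ \forall k.\ f\sqsubseteq h_k\}$. Assertions: built from primitive assertions $P$ (e.g. $E\hookrightarrow F$), assertion variables, $\mathsf{true},\mathsf{false},\wedge,\vee,*$, quantifiers over integer variables. $n$-ary meaning under $\eta$ and $\rho:\mathsf{AVar}\to\mathsf{IRel}_n$: $[\![P]\!]^n=\Delta_n([\![P]\!]^{\mathrm{prim}}_\eta)$, $[\![a]\!]^n=\rho(a)$, connectives by $\mathsf{Heap}^n,\emptyset,\cap,\cup,*$, quantifiers by unions/intersections. $\varphi\Rightarrow\psi$ holds in the $n$-ary interpretation if $[\![\varphi]\!]^n_{\eta,\rho}\subseteq[\![\psi]\!]^n_{\eta,\rho}$ for all $\eta$ and all $\rho:\mathsf{AVar}\to\mathsf{IRel}_n$; unary means $n=1$, binary $n=2$. $V=\{a_{i,k}\}$; $\Pi(i)(c)=|\{k\mid a_{i,k}=c\}|$, $\Omega(j)(c)=|\{k\mid b_{j,k}=c\}|$ for $c\in V$; $\Pi(i)\ge\Omega(j)$ iff $\Pi(i)(c)\ge\Omega(j)(c)$ for all $c\in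 V$, and $\Pi(i)\not\ge\Omega(j)$ otherwise. *)

(* Defs.v *)
From Stdlib Require Import ZArith.
From HB Require Import structures.
From mathcomp Require Import all_boot.
Set Implicit Arguments. Unset Strict Implicit. Unset Printing Implicit Defensive.

Record heap := Heap {
  hfun : positive -> option Z;
  hfin : exists b : positive, forall l, (b < l)%positive -> hfun l = None }.

Definition hsub (g h : heap) : Prop :=
  forall l v, hfun g l = Some v -> hfun h l = Some v.

Definition hdisj (g h : heap) : Prop :=
  forall l, hfun g l = None \/ hfun h l = None.

Definition hunion (f g h : heap) : Prop :=
  hdisj f g /\
  forall l, hfun h l = match hfun f l with Some v => Some v | None => hfun g l end.

Lemma singleton_fin (l : positive) (v : Z) :
  exists b : positive, forall l', (b < l')%positive ->
    (if Pos.eqb l' l then Some v else None) = None.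
Proof.
  exists l; intros l' Hl. destruct (Pos.eqb_spec l' l) as [->|]; [|reflexivity].
  exfalso; exact (Pos.lt_irrefl _ Hl).
Qed.
Definition hsingle (l : positive) (v : Z) : heap :=
  Heap (singleton_fin l v).

Definition htuple (n : nat) := 'I_n -> heap.

Record IRel (n : nat) := MkIRel {
  irel : htuple n -> Prop;
  irel_up : forall h h' : htuple n, irel h -> (forall k, hsub (h k) (h' k)) -> irel h' }.

Definition Delta (n : nat) (X : heap -> Prop) : htuple n -> Prop :=
  fun h => exists f, X f /\ forall k, hsub f (h k).

Definition starR (n : nat) (p q : htuple n -> Prop) : htuple n -> Prop :=
  fun h => exists f g : htuple n, p f /\ q g /\ forall k, hunion (f k) (g k) (h k).

Definition ivar := nat.
Definition avar := nat.

Inductive expr :=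
| EVar of ivar
| EConst of Z
| EAdd of expr & expr
| ESub of expr & expr
| EMul of expr & expr.

Fixpoint eval (eta : ivar -> Z) (e : expr) : Z :=
  match e with
  | EVar x => eta x
  | EConst c => c
  | EAdd e1 e2 => (eval eta e1 + eval eta e2)%Z
  | ESub e1 e2 => (eval eta e1 - eval eta e2)%Z
  | EMul e1 e2 => (eval eta e1 * eval eta e2)%Z
  end.

Inductive prim := PPointsTo of expr & expr.

(* unary (plain) meaning of primitives: [[E ↪ F]] = {[E |-> F]} (empty if E <= 0) *)
Definition sem_prim (eta : ivar -> Z) (P : prim) : heap -> Prop :=
  match P with
  | PPointsTo E F => fun h =>
      (0 < eval eta E)%Z /\ h = hsingle (Z.to_pos (eval eta E)) (eval eta F)
  end.

Inductive assn :=
| APrim of prim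
| AV of avar
| ATrue
| AFalse
| AAnd of assn & assn
| AOr of assn & assn
| AStar of assn & assn
| AEx of ivar & assn
| AAll of ivar & assn.

Fixpoint no_avar (A : assn) : bool :=
  match A with
  | AV _ => false
  | APrim _ | ATrue | AFalse => true
  | AAnd A B | AOr A B | AStar A B => no_avar A && no_avar B
  | AEx _ A | AAll _ A => no_avar A
  end.

Definition upd (eta : ivar -> Z) (x : ivar) (v : Z) : ivar -> Z :=
  fun y => if y == x then v else eta y.

Fixpoint sem (n : nat) (eta : ivar -> Z) (rho : avar -> IRel n) (A : assn)
  : htuple n -> Prop :=
  match A with
  | APrim P => @Delta n (sem_prim eta P)
  | AV a => irel (rho a)
  | ATrue => fun _ => True
  | AFalse => fun _ => False
  | AAnd A B => fun h => sem eta rho A h /\ sem eta rho B h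
  | AOr A B => fun h => sem eta rho A h \/ sem eta rho B h
  | AStar A B => @starR n (sem eta rho A) (sem eta rho B)
  | AEx x A => fun h => exists v : Z, sem (upd eta x v) rho A h
  | AAll x A => fun h => forall v : Z, sem (upd eta x v) rho A h
  end.

Definition valid_n (n : nat) (A B : assn) : Prop :=
  forall (eta : ivar -> Z) (rho : avar -> IRel n) (h : htuple n),
    sem eta rho A h -> sem eta rho B h.

Definition star_vars (phi : assn) (s : seq avar) : assn :=
  foldl (fun acc v => AStar acc (AV v)) phi s.

Fixpoint bigAnd (s : seq assn) : assn :=
  match s with
  | [::] => ATrue
  | [:: x] => x
  | x :: xs => AAnd x (bigAnd xs)
  end.

Fixpoint bigOr (s : seq assn) : assn :=
  match s with
  | [::] => AFalse
  | [:: x] => x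
  | x :: xs => AOr x (bigOr xs)
  end.

Definition lhs (phis : seq assn) (a : seq (seq avar)) : assn :=
  bigAnd [seq star_vars p.1 p.2 | p <- zip phis a].
Definition rhs (psis : seq assn) (b : seq (seq avar)) : assn :=
  bigOr [seq star_vars p.1 p.2 | p <- zip psis b].

Definition Pi_ge_Omega (a b : seq (seq avar)) (i j : nat) : Prop :=
  forall c, c \in flatten a ->
    count_mem c (nth [::] b j) <= count_mem c (nth [::] a i).

(* Main.v *)
Require Import Defs.
From Stdlib Require Import ZArith Lia Classical ClassicalEpsilon.
From mathcomp Require Import all_boot zify.
Set Implicit Arguments. Unset Strict Implicit. Unset Printing Implicit Defensive.


Definition indom (f : heap) (l : positive) : bool :=
  if hfun f l is Some _ then true else false.

Lemma hrestr_fin (h : heap) (P : positive -> bool) :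
  exists b : positive, forall l, (b < l)%positive ->
    (if P l then hfun h l else None) = None.
Proof.
  case: (hfin h) => b Hb; exists b => l Hl; case: (P l) => //; exact: Hb.
Qed.
Definition hrestr (h : heap) (P : positive -> bool) : heap :=
  @Heap (fun l => if P l then hfun h l else None) (hrestr_fin h P).

Lemma hemp_fin : exists b : positive, forall l, (b < l)%positive -> (fun _ : positive => @None Z) l = None.
Proof. by exists 1%positive. Qed.
Definition hemp : heap := @Heap (fun _ => None) hemp_fin.

Definition tsub n (f h : htuple n) := forall k, hsub (f k) (h k).
Definition tdisj n (f g : htuple n) := forall k, hdisj (f k) (g k).
Definition temp n : htuple n := fun _ => hemp.

Lemma hsub_refl h : hsub h h. Proof. by []. Qed.
Lemma hsub_trans f g h : hsub f g -> hsub g h -> hsub f h.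
Proof. by move=> H1 H2 l v /H1 /H2. Qed.
Lemma tsub_refl n (h : htuple n) : tsub h h. Proof. by move=> k. Qed.
Lemma tsub_trans n (f g h : htuple n) : tsub f g -> tsub g h -> tsub f h.
Proof. by move=> H1 H2 k; apply: hsub_trans (H1 k) (H2 k). Qed.
Lemma tdisj_sym n (f g : htuple n) : tdisj f g -> tdisj g f.
Proof. by move=> H k l; case: (H k l); auto. Qed.
Lemma tdisj_sub n (f f' g : htuple n) : tsub f f' -> tdisj f' g -> tdisj f g.
Proof.
  move=> Hs Hd k l; case: (Hd k l) => H; last by right.
  left; case E: (hfun (f k) l) => [v|] //; by rewrite (Hs k l v E) in H.
Qed.
Lemma temp_sub n (h : htuple n) : tsub (@temp n) h. Proof. by []. Qed.
Lemma temp_disj n (h : htuple n) : tdisj (@temp n) h. Proof. by move=> k l; left. Qed.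

Definition hminus (h f : heap) : heap := hrestr h (fun l => ~~ indom f l).
Definition tminus n (h f : htuple n) : htuple n := fun k => hminus (h k) (f k).

Lemma hunion_minus (f h : heap) : hsub f h -> hunion f (hminus h f) h.
Proof.
  move=> Hs; split.
  - move=> l; rewrite /hminus /= /indom; case: (hfun f l) => [v|]; [right|left]; by [].
  - move=> l; rewrite /hminus /= /indom; case E: (hfun f l) => [v|] //=.
    by rewrite (Hs l v E).
Qed.

Lemma hsub_minus (g f h : heap) : hsub g h -> hdisj f g -> hsub g (hminus h f).
Proof.
  move=> Hs Hd l v E; rewrite /hminus /= /indom.
  case: (Hd l) => H; first by rewrite H; apply: Hs.
  by rewrite H in E.
Qed.

Lemma sem_up n eta (rho : avar -> IRel n) A (h h' : htuple n) :
  sem eta rho A h -> tsub h h' -> sem eta rho A h'.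
Proof.
  elim: A eta h h' => [P|x| | |A IHA B IHB|A IHA B IHB|A IHA B IHB|x A IHA|x A IHA] eta h h' /=.
  - case=> f [Hf Hs] Hh; exists f; split => // k; exact: hsub_trans (Hs k) (Hh k).
  - move=> H Hh; exact: irel_up H Hh.
  - by [].
  - by [].
  - case=> H1 H2 Hh; split; [exact: IHA H1 Hh|exact: IHB H2 Hh].
  - case=> H Hh; [left; exact: IHA H Hh|right; exact: IHB H Hh].
  - case=> f [g [Hf [Hg Hu]]] Hh.
    exists f, (tminus h' f); split => //; split.
    + apply: IHB Hg _ => k l v E.
      case: (Hu k) => Hd Hl.
      have Hfn : hfun (f k) l = None by case: (Hd l) => // H; rewrite H in E.
      rewrite /tminus /hminus /= /indom Hfn /=; apply: (Hh k); by rewrite Hl Hfn.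
    + move=> k; apply: hunion_minus => l v E.
      case: (Hu k) => _ Hl; apply: (Hh k); by rewrite Hl E.
  - case=> v H Hh; exists v; exact: IHA H Hh.
  - move=> H Hh v; exact: IHA (H v) Hh.
Qed.

Lemma star_intro n eta (rho : avar -> IRel n) A B (p q h : htuple n) :
  sem eta rho A p -> sem eta rho B q -> tdisj p q -> tsub p h -> tsub q h ->
  sem eta rho (AStar A B) h.
Proof.
  move=> HA HB Hd Hp Hq; exists p, (tminus h p); split => //; split.
  - apply: sem_up HB _ => k; apply: hsub_minus; [exact: Hq|exact: Hd].
  - move=> k; apply: hunion_minus; exact: Hp.
Qed.

Lemma star_elim n eta (rho : avar -> IRel n) A B (h : htuple n) :
  sem eta rho (AStar A B) h ->
  exists p q, sem eta rho A p /\ sem eta rho B q /\ tdisj p q /\ tsub p h /\ tsub q h.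
Proof.
  case=> p [q [HA [HB Hu]]]; exists p, q; do 3 (split => //).
  - by move=> k; case: (Hu k).
  - split => k l v E; case: (Hu k) => Hd Hl; rewrite Hl.
    + by rewrite E.
    + by case: (Hd l) => H; [rewrite H|rewrite H in E].
Qed.


Section Fam.
Variables (n : nat) (eta : ivar -> Z) (rho : avar -> IRel n).

Definition fam_ok (s : seq avar) (ws : seq (htuple n)) :=
  size ws = size s /\ forall k, k < size s -> irel (rho (nth 0 s k)) (nth (@temp n) ws k).
Definition pdisj (ws : seq (htuple n)) := forall i j, i < size ws -> j < size ws -> i != j ->
  tdisj (nth (@temp n) ws i) (nth (@temp n) ws j).
Definition alld (f : htuple n) ws := forall k, k < size ws -> tdisj f (nth (@temp n) ws k).
Definition allsub ws (h : htuple n) := forall k, k < size ws -> tsub (nth (@temp n) ws k) h.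

Lemma star_vars_rcons phi s x : star_vars phi (rcons s x) = AStar (star_vars phi s) (AV x).
Proof. by rewrite /star_vars foldl_rcons. Qed.

Lemma tminus_disj (h w : htuple n) : tdisj (tminus h w) w.
Proof.
  move=> k l; rewrite /tminus /hminus /= /indom.
  case: (hfun (w k) l) => [v|]; [left|right]; by [].
Qed.
Lemma tminus_sub (h w : htuple n) : tsub (tminus h w) h.
Proof. by move=> k l v; rewrite /tminus /hminus /=; case: (~~ indom _ _). Qed.
Lemma tsub_minus (g w h : htuple n) : tsub g h -> tdisj w g -> tsub g (tminus h w).
Proof. move=> Hs Hd k; apply: hsub_minus; [exact: Hs|exact: Hd]. Qed.

Lemma star_vars_intro phi s ws f h :
  sem eta rho phi f -> fam_ok s ws -> pdisj ws -> alld f ws -> tsub f h -> allsub ws h ->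
  sem eta rho (star_vars phi s) h.
Proof.
  elim/last_ind: s ws f h => [|s x IH] ws f h Hphi [Hsz Hirel] Hpd Had Hf Hws.
  - by apply: sem_up Hphi Hf.
  - move: Hsz; case/lastP: ws Hpd Had Hws Hirel => [|ws w]; first by rewrite size_rcons.
    rewrite !size_rcons => Hpd Had Hws Hirel [Hsz].
    have Hw : irel (rho x) w.
      by move: (Hirel (size s)); rewrite ltnSn !nth_rcons ltnn eqxx -Hsz ltnn eqxx; apply.
    have Hwk : forall k, k < size ws -> nth (@temp n) (rcons ws w) k = nth (@temp n) ws k.
      by move=> k Hk; rewrite nth_rcons Hk.
    have Hwl : nth (@temp n) (rcons ws w) (size ws) = w by rewrite nth_rcons ltnn eqxx.
    have Hlt : forall k, k < size ws -> k < size (rcons ws w) by move=> k Hk; rewrite size_rcons ltnW.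
    have Hls : size ws < size (rcons ws w) by rewrite size_rcons.
    rewrite star_vars_rcons; apply: (@star_intro _ _ _ _ _ (tminus h w) w).
    + apply: (IH ws f) => //.
      * split => // k Hk; have := Hirel k (ltnW Hk).
        by rewrite !nth_rcons Hsz Hk.
      * move=> i j Hi Hj Hij; by have := Hpd i j (Hlt _ Hi) (Hlt _ Hj) Hij; rewrite !Hwk.
      * move=> k Hk; by have := Had k (Hlt _ Hk); rewrite Hwk.
      * apply: tsub_minus => //; have := Had _ Hls; rewrite Hwl => H.
        exact: tdisj_sym H.
      * move=> k Hk; apply: tsub_minus.
        - by have := Hws k (Hlt _ Hk); rewrite Hwk.
        - have := Hpd (size ws) k Hls (Hlt _ Hk); rewrite Hwl Hwk //; apply.
          by rewrite neq_ltn Hk orbT.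
    + exact: Hw.
    + exact: tminus_disj.
    + exact: tminus_sub.
    + by have := Hws _ Hls; rewrite Hwl.
Qed.

Lemma star_vars_elim phi s h :
  sem eta rho (star_vars phi s) h ->
  exists f ws, sem eta rho phi f /\ fam_ok s ws /\ pdisj ws /\ alld f ws /\ tsub f h /\ allsub ws h.
Proof.
  elim/last_ind: s h => [|s x IH] h.
  - move=> H; exists h, [::]; split; first exact: H. split; first by split.
    split; first by move=> i j. split; first by move=> k.
    split; first exact: tsub_refl. by move=> k.
  - rewrite star_vars_rcons => /star_elim [p [q [Hp [Hq [Hd [Hph Hqh]]]]]].
    case: (IH p Hp) => f [ws [Hphi [[Hsz Hirel] [Hpd [Had [Hfp Hwsp]]]]]].
    have Hwk : forall k, k < size ws -> nth (@temp n) (rcons ws q) k = nth (@temp n) ws k.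
      by move=> k Hk; rewrite nth_rcons Hk.
    have Hwl : nth (@temp n) (rcons ws q) (size ws) = q by rewrite nth_rcons ltnn eqxx.
    exists f, (rcons ws q); split; first exact: Hphi. split; [|split; [|split; [|split]]].
    + split; first by rewrite !size_rcons Hsz.
      move=> k; rewrite size_rcons ltnS leq_eqVlt => /orP [/eqP ->|Hk].
      * rewrite !nth_rcons Hsz ltnn eqxx; exact: Hq.
      * rewrite !nth_rcons Hsz Hk; exact: Hirel.
    + move=> i j; rewrite size_rcons !ltnS (leq_eqVlt i) (leq_eqVlt j) => /orP [/eqP ->|Hi] /orP [/eqP ->|Hj] Hij.
      * by move: Hij; rewrite eqxx.
      * rewrite Hwl (Hwk j Hj); apply: tdisj_sym; apply: tdisj_sub (Hwsp j Hj) Hd.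
      * rewrite Hwl (Hwk i Hi); apply: tdisj_sub (Hwsp i Hi) Hd.
      * rewrite (Hwk i Hi) (Hwk j Hj); exact: Hpd.
    + move=> k; rewrite size_rcons ltnS leq_eqVlt => /orP [/eqP ->|Hk].
      * rewrite Hwl; exact: tdisj_sub Hfp Hd.
      * rewrite (Hwk k Hk); exact: Had.
    + exact: tsub_trans Hfp Hph.
    + move=> k; rewrite size_rcons ltnS leq_eqVlt => /orP [/eqP ->|Hk].
      * rewrite Hwl; exact: Hqh.
      * rewrite (Hwk k Hk); exact: tsub_trans (Hwsp k Hk) Hph.
Qed.

End Fam.


Definition loc (u : nat) : positive := Pos.of_succ_nat u.
Lemma loc_inj u v : loc u = loc v -> u = v.
Proof. exact: SuccNat2Pos.inj. Qed.

Definition pt (u : nat) : assn := APrim (PPointsTo (EConst (Zpos (loc u))) (EConst 0)).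
Definition Pl (us : seq nat) : assn := foldr (fun u acc => AStar (pt u) acc) ATrue us.
Definition N1 : assn := AEx 0 (AEx 1 (APrim (PPointsTo (EVar 0) (EVar 1)))).

Lemma no_avar_Pl us : no_avar (Pl us).
Proof. by elim: us. Qed.

Lemma hsub_single (h : heap) l v : hfun h l = Some v -> hsub (hsingle l v) h.
Proof.
  move=> H l' v'; rewrite /hsingle /=; case: (Pos.eqb_spec l' l) => [->|] //.
  by rewrite H => -[->].
Qed.
Lemma single_sub (h : heap) l v : hsub (hsingle l v) h -> hfun h l = Some v.
Proof. move=> H; apply: H; by rewrite /hsingle /= Pos.eqb_refl. Qed.

Section Sem.
Variables (n : nat) (eta : ivar -> Z) (rho : avar -> IRel n).

Lemma pt_intro u (p : htuple n) : (forall k, hfun (p k) (loc u) = Some 0%Z) -> sem eta rho (pt u) p.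
Proof.
  move=> H; exists (hsingle (loc u) 0); split; first by split.
  move=> k; exact: hsub_single.
Qed.
Lemma pt_elim u (p : htuple n) : sem eta rho (pt u) p -> forall k, hfun (p k) (loc u) = Some 0%Z.
Proof. case=> e [[_ ->] H] k; exact: single_sub (H k). Qed.

Lemma Pl_elim us (f : htuple n) : sem eta rho (Pl us) f ->
  forall u, u \in us -> forall k, hfun (f k) (loc u) = Some 0%Z.
Proof.
  elim: us f => [|u us IH] f; first by [].
  move=> /(@star_elim n eta rho (pt u) (Pl us)) [p [q [Hp [Hq [Hd [Hpf Hqf]]]]]] u'.
  rewrite in_cons => /orP [/eqP ->|Hu] k.
  - apply: (Hpf k); exact: pt_elim Hp k.
  - apply: (Hqf k); exact: IH Hq u' Hu k.
Qed.

Definition tsingle (u : nat) : htuple n := fun _ => hsingle (loc u) 0.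

Lemma Pl_intro us (f : htuple n) : uniq us ->
  (forall u, u \in us -> forall k, hfun (f k) (loc u) = Some 0%Z) -> sem eta rho (Pl us) f.
Proof.
  elim: us f => [|u us IH] f; first by [].
  rewrite cons_uniq => /andP [Hnin Huniq] H.
  have Hsf : tsub (tsingle u) f.
    by move=> k; apply: hsub_single; apply: H; rewrite mem_head.
  apply: (@star_intro n eta rho (pt u) (Pl us) (tsingle u) (tminus f (tsingle u))).
  - apply: pt_intro => k; by rewrite /tsingle /hsingle /= Pos.eqb_refl.
  - apply: IH => // u' Hu' k; rewrite /tminus /hminus /= /indom /tsingle /hsingle /=.
    case: (Pos.eqb_spec (loc u') (loc u)) => [/loc_inj E|_].
    + by move: Hnin; rewrite -E Hu'.
    + apply: H; by rewrite in_cons Hu' orbT.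
  - exact: tdisj_sym (tminus_disj _ _).
  - exact: Hsf.
  - exact: tminus_sub.
Qed.

Lemma N1_elim (q : htuple n) : sem eta rho N1 q -> exists l v, forall k, hfun (q k) l = Some v.
Proof.
  case=> v0 [v1 [e [[_ ->] H]]]; exists (Z.to_pos v0), v1 => k.
  have := single_sub (H k); by rewrite /= /upd /=.
Qed.

Lemma N1_intro (q : htuple n) l v : (forall k, hfun (q k) l = Some v) -> sem eta rho N1 q.
Proof.
  move=> H; exists (Zpos l), v; exists (hsingle l v); split.
  - by rewrite /= /upd /=.
  - move=> k; exact: hsub_single.
Qed.

Lemma bigAnd_sem (l : seq assn) (h : htuple n) :
  sem eta rho (bigAnd l) h <-> (forall k, k < size l -> sem eta rho (nth ATrue l k) h).
Proof.
  elim: l => [|A l IH] /=; first by split.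
  case: l IH => [|B l] IH.
  - split; first by move=> H [|k] //. by move=> H; apply: (H 0).
  - split.
    + case=> HA /IH Hl [|k] //= Hk; exact: Hl.
    + move=> H; split; first exact: (H 0). apply/IH => k Hk; exact: (H k.+1).
Qed.

Lemma bigOr_sem (l : seq assn) (h : htuple n) :
  sem eta rho (bigOr l) h <-> (exists k, k < size l /\ sem eta rho (nth AFalse l k) h).
Proof.
  elim: l => [|A l IH] /=; first by split => // -[k []].
  case: l IH => [|B l] IH.
  - split; first by move=> H; exists 0. by case=> -[|k] [].
  - split.
    + case=> [HA|/IH [k [Hk Hl]]]; [by exists 0|by exists k.+1].
    + case=> -[|k] [Hk HA]; [by left|right; apply/IH; by exists k].
Qed.

Lemma lhs_sem phis a (h : htuple n) : size phis = size a ->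
  sem eta rho (lhs phis a) h <->
  (forall k, k < size a -> sem eta rho (star_vars (nth ATrue phis k) (nth [::] a k)) h).
Proof.
  move=> Hs; rewrite /lhs bigAnd_sem size_map size_zip Hs minnn.
  split => H k Hk; move: (H k Hk).
  - by rewrite (nth_map (ATrue, [::])) ?size_zip ?Hs ?minnn // nth_zip.
  - by rewrite (nth_map (ATrue, [::])) ?size_zip ?Hs ?minnn // nth_zip.
Qed.

Lemma rhs_sem psis b (h : htuple n) : size psis = size b ->
  sem eta rho (rhs psis b) h <->
  (exists k, k < size b /\ sem eta rho (star_vars (nth AFalse psis k) (nth [::] b k)) h).
Proof.
  move=> Hs; rewrite /rhs bigOr_sem size_map size_zip Hs minnn.
  split => -[k [Hk H]]; exists k; split => //; move: H.
  - by rewrite (nth_map (AFalse, [::])) ?size_zip ?Hs ?minnn // nth_zip.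
  - by rewrite (nth_map (AFalse, [::])) ?size_zip ?Hs ?minnn // nth_zip.
Qed.

End Sem.


Lemma select (s b P : seq nat) : uniq P ->
  (forall x, count_mem x b <= count (fun k => nth 0 s k == x) P) ->
  exists sel, uniq sel /\ {subset sel <= P} /\ map (nth 0 s) sel = b.
Proof.
  elim: b P => [|x b IH] P HP Hc; first by exists [::].
  have : has (fun k => nth 0 s k == x) P.
    by rewrite has_count; apply: leq_trans (Hc x); rewrite /= eqxx.
  case/hasP => k HkP /eqP Hkx.
  have Hperm := perm_to_rem HkP.
  have Hcnt : forall p, count p P = p k + count p (rem k P).
    by move=> p; rewrite (permP Hperm).
  case: (IH (rem k P)) => [|y|sel [Hu [Hs Hm]]].
  - exact: rem_uniq.
  - move: (Hc y); rewrite Hcnt /= Hkx.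
    case: (eqVneq x y) => [<-|Hxy]; first by rewrite leq_add2l.
    by rewrite !add0n.
  - exists (k :: sel); split; [|split].
    + rewrite /= Hu andbT; apply/negP => /Hs; by rewrite mem_rem_uniqF.
    + move=> z; rewrite in_cons => /orP [/eqP ->//|/Hs]; exact: mem_rem.
    + by rewrite /= Hkx Hm.
Qed.

Lemma count_iota_nth (s : seq nat) (p : pred nat) :
  count (fun k => p (nth 0 s k)) (iota 0 (size s)) = count p s.
Proof.
  by rewrite -[in RHS](mkseq_nth 0 s) /mkseq count_map.
Qed.

Lemma inj_count (P : seq nat) (R : nat -> nat -> Prop) (lo len : nat) : uniq P ->
  (forall k, k \in P -> exists t, lo <= t < lo + len /\ R k t) ->
  (forall k1 k2 t, k1 \in P -> k2 \in P -> R k1 t -> R k2 t -> k1 = k2) ->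
  size P <= len.
Proof.
  move=> HP Hex Hinj.
  pose f k := epsilon (inhabits 0) (fun t => k \in P -> lo <= t < lo + len /\ R k t).
  have Hf : forall k, k \in P -> lo <= f k < lo + len /\ R k (f k).
    move=> k Hk; apply: (epsilon_spec (inhabits 0) (fun t => k \in P -> lo <= t < lo + len /\ R k t)) => //.
    case: (Hex k Hk) => t Ht; by exists t.
  rewrite -(size_map f) -(size_iota lo len); apply: uniq_leq_size.
  - rewrite map_inj_in_uniq // => k1 k2 H1 H2 E.
    apply: (Hinj k1 k2 (f k1)) => //; [exact: (Hf k1 H1).2|rewrite E; exact: (Hf k2 H2).2].
  - move=> t /mapP [k Hk ->]; rewrite mem_iota; exact: (Hf k Hk).1.
Qed.

Lemma exists_min (s : seq nat) (f : nat -> nat) : s != [::] ->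
  exists y, y \in s /\ forall x, x \in s -> f y <= f x.
Proof.
  elim: s => [|z s IH] // _.
  case: s IH => [|w s] IH.
  - exists z; split; first exact: mem_head. by move=> x; rewrite inE => /eqP ->.
  - case: (IH isT) => y [Hy Hmin].
    case: (leqP (f z) (f y)) => H.
    + exists z; split; first exact: mem_head.
      move=> x; rewrite in_cons => /orP [/eqP ->//|Hx]; exact: leq_trans H (Hmin x Hx).
    + exists y; split; first by rewrite in_cons Hy orbT.
      move=> x; rewrite in_cons => /orP [/eqP ->|Hx]; [exact: ltnW|exact: Hmin].
Qed.

Definition occ (s : seq nat) (k : nat) := count (fun k' => nth 0 s k' == nth 0 s k) (iota 0 k).

Lemma occ_mono (s : seq nat) k1 k2 : k1 < k2 -> nth 0 s k1 = nth 0 s k2 -> occ s k1 < occ s k2.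
Proof.
  move=> Hlt Heq; rewrite /occ -Heq.
  rewrite -(subnKC (ltnW Hlt)) iotaD count_cat add0n -[X in X < _]addn0 ltn_add2l.
  rewrite -(subnSK Hlt) /= eqxx; by [].
Qed.

Lemma occ_lt (s : seq nat) k : k < size s -> occ s k < count_mem (nth 0 s k) s.
Proof.
  move=> Hk; rewrite -count_iota_nth /occ.
  rewrite -(subnKC (ltnW Hk)) iotaD count_cat add0n -[X in X < _]addn0 ltn_add2l.
  rewrite -(subnSK Hk) /= eqxx; by [].
Qed.

Lemma occ_inj (s : seq nat) k1 k2 : nth 0 s k1 = nth 0 s k2 -> occ s k1 = occ s k2 -> k1 = k2.
Proof.
  move=> Heq Ho; case: (ltngtP k1 k2) => // H.
  - by move: (occ_mono H Heq); rewrite Ho ltnn.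
  - by move: (occ_mono H (esym Heq)); rewrite Ho ltnn.
Qed.

Definition pos (s : seq nat) (x : nat) := [seq k <- iota 0 (size s) | nth 0 s k == x].
Lemma size_pos s x : size (pos s x) = count_mem x s.
Proof. rewrite size_filter -(count_iota_nth s (pred1 x)); by []. Qed.
Lemma pos_uniq s x : uniq (pos s x).
Proof. apply: filter_uniq; exact: iota_uniq. Qed.
Lemma mem_pos s x k : (k \in pos s x) = (k < size s) && (nth 0 s k == x).
Proof. by rewrite mem_filter mem_iota add0n andbC. Qed.


Section Route.
Variables (n : nat) (eta : ivar -> Z) (rho : avar -> IRel n).

Definition rest (h : htuple n) (ws : seq (htuple n)) (sel : seq nat) : htuple n :=
  fun k => hrestr (h k) (fun l => ~~ has (fun j => indom (nth (@temp n) ws j k) l) sel).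

Lemma rest_sub h ws sel : tsub (rest h ws sel) h.
Proof. by move=> k l v; rewrite /rest /=; case: (~~ _). Qed.

Lemma rest_keep h ws sel g : tsub g h -> (forall j, j \in sel -> tdisj (nth (@temp n) ws j) g) ->
  tsub g (rest h ws sel).
Proof.
  move=> Hs Hd k l v E; rewrite /rest /=.
  case Hh: (has _ _); last by apply: (Hs k).
  case/hasP: Hh => j Hj; rewrite /indom.
  case: (Hd j Hj k l) => H; first by rewrite H.
  by rewrite H in E.
Qed.

Lemma rest_disj h ws sel j : j \in sel -> tdisj (rest h ws sel) (nth (@temp n) ws j).
Proof.
  move=> Hj k l; rewrite /rest /=.
  case Hh: (has _ _) => /=; first by left.
  right; move/hasPn: Hh => /(_ j Hj); rewrite /indom; by case: (hfun _ _).
Qed.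

Lemma route (h : htuple n) (s : seq avar) ws (b : seq avar) psi (sel : seq nat) :
  fam_ok rho s ws -> pdisj ws -> allsub ws h ->
  uniq sel -> (forall k, k \in sel -> k < size s) -> map (nth 0 s) sel = b ->
  sem eta rho psi (rest h ws sel) -> sem eta rho (star_vars psi b) h.
Proof.
  move=> [Hsz Hirel] Hpd Hws Hu Hlt Hmap Hpsi.
  have Hselk : forall k, k < size sel -> nth 0 sel k < size s by move=> k Hk; apply: Hlt; exact: mem_nth.
  apply: (@star_vars_intro n eta rho psi b (map (nth (@temp n) ws) sel) (rest h ws sel) h) => //.
  - split; first by rewrite size_map -Hmap size_map.
    move=> k; rewrite -{1}Hmap size_map => Hk.
    rewrite -Hmap (nth_map 0) // (nth_map 0) //; apply: Hirel; exact: Hselk.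
  - move=> i j; rewrite size_map => Hi Hj Hij; rewrite !(nth_map 0) //.
    apply: Hpd; rewrite ?Hsz; try exact: Hselk.
    by rewrite nth_uniq.
  - move=> k; rewrite size_map => Hk; rewrite (nth_map 0) //; apply: rest_disj; exact: mem_nth.
  - exact: rest_sub.
  - move=> k; rewrite size_map => Hk; rewrite (nth_map 0) //; apply: Hws; rewrite Hsz; exact: Hselk.
Qed.

End Route.

Lemma count_andC (l : seq nat) (p q : pred nat) :
  count p l <= count (fun k => p k && q k) l + count (fun k => ~~ q k) l.
Proof.
  elim: l => [|x l IH] //=; case: (p x); case: (q x) => /=; lia.
Qed.


Definition NC (a : seq (seq avar)) := 10 * (size (flatten a) + 2).
Definition Qcodes a := [seq u <- iota 0 (NC a) | u %% 5 < 2].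
Definition RScodes a := [seq u <- iota 0 (NC a) | 2 <= u %% 5].
Definition Scodes (sg : nat) := [seq 10 * l + 4 | l <- iota 0 sg].
Definition phi0 a := Pl (RScodes a).
Definition phi1 a := Pl (Qcodes a).
Definition psi1 a sg := if 0 < sg then Pl (Qcodes a ++ Scodes sg) else AStar (Pl (Qcodes a)) N1.

Lemma cnt_mem (x : nat) (s : seq nat) : 0 < count_mem x s -> x \in s.
Proof. move=> H; apply/negPn/negP => /count_memPn E; by rewrite E in H. Qed.

Lemma mem_Scodes sg u : u \in Scodes sg -> exists l, l < sg /\ u = 10 * l + 4.
Proof. by case/mapP => l; rewrite mem_iota add0n => /andP [_ Hl] ->; exists l. Qed.

Lemma Scodes_RS a sg u : sg <= size (flatten a) -> u \in Scodes sg -> u \in RScodes a.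
Proof.
  move=> Hsg /mem_Scodes [l [Hl ->]]; rewrite mem_filter mem_iota /NC; apply/andP; split; first by lia.
  apply/andP; split; lia.
Qed.

Lemma uniq_QS a sg : uniq (Qcodes a ++ Scodes sg).
Proof.
  rewrite cat_uniq; apply/and3P; split.
  - apply: filter_uniq; exact: iota_uniq.
  - apply/hasPn => u /mem_Scodes [l [_ ->]]; rewrite mem_filter; apply/negP => /andP [H _]; lia.
  - rewrite map_inj_uniq ?iota_uniq // => x y; lia.
Qed.
Lemma uniq_RS a : uniq (RScodes a).
Proof. apply: filter_uniq; exact: iota_uniq. Qed.
Lemma uniq_Q a : uniq (Qcodes a).
Proof. apply: filter_uniq; exact: iota_uniq. Qed.

Section Unary.
Variables (a b : seq (seq avar)) (i0 i1 j0 j1 : nat).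
Variables (eta : ivar -> Z) (rho : avar -> IRel 1) (h : htuple 1).
Local Notation A0 := (nth [::] a i0).
Local Notation A1 := (nth [::] a i1).
Local Notation B0 := (nth [::] b j0).
Local Notation B1 := (nth [::] b j1).

Hypothesis Hlay : forall j, j < size b -> forall x, x \in nth [::] b j -> x \in flatten a.
Hypothesis Hj0 : j0 < size b.
Hypothesis Hj1 : j1 < size b.
Hypothesis H01 : Pi_ge_Omega a b i0 j1.
Hypothesis H10 : Pi_ge_Omega a b i1 j0.
Hypothesis H11 : Pi_ge_Omega a b i1 j1.

Lemma ord1_all (P : 'I_1 -> Prop) : P ord0 -> forall k, P k.
Proof. by move=> H k; rewrite (ord1 k). Qed.

Lemma unary_T sg :
  0 < sg -> sg <= size (flatten a) ->
  (forall x, x \in B1 -> sg <= count_mem x A1 - count_mem x B1) ->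
  sem eta rho (star_vars (phi0 a) A0) h -> sem eta rho (star_vars (phi1 a) A1) h ->
  sem eta rho (star_vars (Pl (Qcodes a ++ Scodes sg)) B1) h.
Proof.
  move=> Hsg0 Hsgb Hsp H0 H1.
  case/star_vars_elim: H0 => f0 [ws0 [Hf0 [_ [_ [_ [Hf0h _]]]]]].
  have HS : forall u, u \in Scodes sg -> hfun (h ord0) (loc u) = Some 0%Z.
    move=> u Hu; apply: (Hf0h ord0); apply: (Pl_elim Hf0); exact: Scodes_RS Hu.
  case/star_vars_elim: H1 => f1 [ws1 [Hf1 [[Hsz Hirel] [Hpd [Had [Hf1h Hws]]]]]].
  pose tch k := has (fun u => indom (nth (@temp 1) ws1 k ord0) (loc u)) (Scodes sg).
  pose P := [seq k <- iota 0 (size A1) | ~~ tch k].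
  have Htch : count tch (iota 0 (size A1)) <= sg.
    rewrite -size_filter.
    apply: (@inj_count _ (fun k t => indom (nth (@temp 1) ws1 k ord0) (loc (10 * t + 4))) 0 sg).
    - apply: filter_uniq; exact: iota_uniq.
    - move=> k; rewrite mem_filter => /andP [/hasP [u Hu Hin] _].
      case: (mem_Scodes Hu) => l [Hl Eu]; exists l; split; first by lia.
      by rewrite -Eu.
    - move=> k1 k2 t; rewrite !mem_filter !mem_iota !add0n => /andP [_ /andP [_ Hk1]] /andP [_ /andP [_ Hk2]] E1 E2.
      apply/eqP; apply/negPn/negP => Hne.
      have := Hpd k1 k2; rewrite Hsz => /(_ Hk1 Hk2 Hne ord0 (loc (10 * t + 4))).
      move: E1 E2; rewrite /indom; case: (hfun _ _) => // v _; case: (hfun _ _) => // v' _.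
      by case.
  have Hcnt : forall x, count_mem x B1 <= count (fun k => nth 0 A1 k == x) P.
    move=> x.
    have -> : count (fun k => nth 0 A1 k == x) P =
              count (fun k => (nth 0 A1 k == x) && ~~ tch k) (iota 0 (size A1)).
      by rewrite count_filter; apply: eq_count => k.
    have Hc := count_andC (iota 0 (size A1)) (fun k => nth 0 A1 k == x) (fun k => ~~ tch k).
    rewrite (@count_iota_nth A1 (pred1 x)) in Hc.
    have E : count (fun k => ~~ ~~ tch k) (iota 0 (size A1)) = count tch (iota 0 (size A1)).
      by apply: eq_count => k; rewrite negbK.
    rewrite E in Hc.
    case Hx: (x \in B1).
    + have Hxa : x \in flatten a := Hlay Hj1 Hx.
      have := H11 Hxa; have := Hsp x Hx.
      move: Hc Htch; set c1 := count _ (iota _ _); set c2 := count _ (iota _ _); clearbody c1 c2; set AA := count_mem x A1; set BB := count_mem x B1; clearbody AA BB; lia.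
    + by rewrite (count_memPn (negbT Hx)).
  case: (@select A1 B1 P) => [|x|sel [Hu [Hsub Hmap]]].
  - apply: filter_uniq; exact: iota_uniq.
  - exact: Hcnt.
  have HselP : forall j, j \in sel -> (j < size A1) && ~~ tch j.
    by move=> j /Hsub; rewrite mem_filter mem_iota add0n andbC.
  apply: (route (h:=h) (s:=A1) (ws:=ws1) (b:=B1) (sel:=sel)) => //.
  - by move=> k /HselP /andP [].
  - apply: Pl_intro; first exact: uniq_QS.
    move=> u Hu'; apply: ord1_all; rewrite /rest /=.
    have Hn : ~~ has (fun j => indom (nth (@temp 1) ws1 j ord0) (loc u)) sel.
      apply/hasPn => j /HselP /andP [Hj Htj].
      move: Hu'; rewrite mem_cat => /orP [HQ|HSu].
      * have Hf := Pl_elim Hf1 HQ ord0.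
        have := Had j; rewrite Hsz => /(_ Hj ord0 (loc u)); rewrite Hf.
        by rewrite /indom; case=> // ->.
      * move/hasPn: Htj => /(_ u HSu); by [].
    rewrite Hn /=; move: Hu'; rewrite mem_cat => /orP [HQ|HSu].
    + apply: (Hf1h ord0); have := Pl_elim Hf1 HQ ord0; exact.
    + exact: HS.
Qed.


Lemma unary_N :
  sem eta rho (star_vars (phi0 a) A0) h -> sem eta rho (star_vars (phi1 a) A1) h ->
  sem eta rho (star_vars (phi0 a) B0) h \/
  sem eta rho (star_vars (AStar (Pl (Qcodes a)) N1) B1) h.
Proof.
  move=> H0 H1.
  case: (classic (forall d, count_mem d A0 < count_mem d B0 -> irel (rho d) (@temp 1))) => [HA|HB].
  - left.
    case/star_vars_elim: H0 => f0 [ws0 [Hf0 [[Hsz Hirel] [Hpd [Had [Hf0h Hws]]]]]].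
    pose E := [seq x <- B0 | count_mem x A0 < count_mem x B0].
    pose s' := A0 ++ E.
    pose ws' := ws0 ++ nseq (size E) (@temp 1).
    have Hsz' : size ws' = size s' by rewrite /ws' /s' !size_cat size_nseq Hsz.
    have Hnth : forall k, nth (@temp 1) ws' k = if k < size A0 then nth (@temp 1) ws0 k else @temp 1.
      move=> k; rewrite /ws' nth_cat Hsz; case: ifP => // _.
      by rewrite nth_nseq; case: ifP.
    have Hfam : fam_ok rho s' ws'.
      split => // k Hk; rewrite Hnth /s' nth_cat.
      case: ifP => Hk0; first exact: Hirel.
      apply: HA; have : nth 0 E (k - size A0) \in E.
        apply: mem_nth; move: Hk (negbT Hk0); rewrite /s' size_cat -leqNgt => Hq1 Hq2; by rewrite ltn_subLR.
      by rewrite mem_filter => /andP [].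
    have Hpd' : pdisj ws'.
      move=> i j Hi Hj Hij; rewrite !Hnth.
      case: ifP => Hi0; case: ifP => Hj0'.
      + by apply: Hpd; rewrite ?Hsz.
      + exact: tdisj_sym (temp_disj _).
      + exact: temp_disj.
      + exact: temp_disj.
    have Hws' : allsub ws' h.
      move=> k Hk; rewrite Hnth; case: ifP => Hk0; [apply: Hws; by rewrite Hsz|exact: temp_sub].
    case: (@select s' B0 (iota 0 (size s')) (iota_uniq _ _)) => [x|sel [Hu [Hsub Hmap]]].
    + rewrite (@count_iota_nth s' (pred1 x)) /s' count_cat /E count_filter.
      case Hx: (count_mem x A0 < count_mem x B0).
      * have -> : count (predI (pred1 x) (fun x0 => count_mem x0 A0 < count_mem x0 B0)) B0 =
                  count_mem x B0.
          apply: eq_count => y /=; case: (eqVneq y x) => [->|] //=; by rewrite Hx.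
        exact: leq_addl.
      * move/negbT: Hx; rewrite -leqNgt => Hx; exact: leq_trans Hx (leq_addr _ _).
    + apply: (route (h:=h) (s:=s') (ws:=ws') (b:=B0) (sel:=sel)) => //.
      * by move=> k /Hsub; rewrite mem_iota.
      * apply: sem_up Hf0 _; apply: rest_keep => // j Hj k l.
        rewrite Hnth; case: ifP => Hj0'.
        - have := Had j; rewrite Hsz => /(_ Hj0' k l); case; by [right|left].
        - by left.
  - right.
    case: (not_all_ex_not _ _ HB) => d Hd.
    case: (imply_to_and _ _ Hd) => Hdef Hnot.
    have HdB0 : d \in B0 by apply: cnt_mem; lia.
    have Hda : d \in flatten a := Hlay Hj0 HdB0.
    have Hd10 := H10 Hda.
    have Hd01 := H01 Hda.
    case/star_vars_elim: H1 => f1 [ws1 [Hf1 [[Hsz Hirel] [Hpd [Had [Hf1h Hws]]]]]].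
    pose p := index d A1.
    have HdA1 : d \in A1 by apply: cnt_mem; lia.
    have Hp : p < size A1 by rewrite index_mem.
    have Hnp : nth 0 A1 p = d by rewrite nth_index.
    pose P := [seq k <- iota 0 (size A1) | k != p].
    case: (@select A1 B1 P) => [|x|sel [Hu [Hsub Hmap]]].
    + apply: filter_uniq; exact: iota_uniq.
    + rewrite count_filter.
      case: (eqVneq x d) => [->|Hxd].
      * have Hc := count_andC (iota 0 (size A1)) (fun k => nth 0 A1 k == d) (fun k => k != p).
        rewrite (@count_iota_nth A1 (pred1 d)) in Hc.
        have E1 : count (fun k => ~~ (k != p)) (iota 0 (size A1)) = 1.
          rewrite (eq_count (a2 := pred1 p)); last by move=> k; rewrite negbK.
          by rewrite count_uniq_mem ?iota_uniq // mem_iota add0n Hp.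
        have E2 : count (predI (fun k => nth 0 A1 k == d) (fun k => k != p)) (iota 0 (size A1)) =
                  count (fun k => (nth 0 A1 k == d) && (k != p)) (iota 0 (size A1)) by [].
        rewrite E2; move: Hc; rewrite E1.
        set c1 := count _ (iota _ _); set AA := count_mem d A1; set B1d := count_mem d B1.
        set A0d := count_mem d A0; set B0d := count_mem d B0.
        move: Hdef Hd10 Hd01; rewrite -/A0d -/B0d -/B1d -/AA.
        clearbody c1 AA B1d A0d B0d; lia.
      * have -> : count (predI (fun k => nth 0 A1 k == x) (fun k => k != p)) (iota 0 (size A1)) =
                  count (fun k => nth 0 A1 k == x) (iota 0 (size A1)).
          apply: eq_count => k /=; case: (eqVneq k p) => [->|_]; last by rewrite /= andbT.
          by rewrite Hnp andbF eq_sym (negbTE Hxd).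
        rewrite (@count_iota_nth A1 (pred1 x)).
        case Hx: (x \in flatten a); first exact: H11.
        rewrite (count_memPn _) //; apply/negP => HxB; by rewrite (Hlay Hj1 HxB) in Hx.
    + have HselP : forall j, j \in sel -> (j < size A1) && (j != p).
        by move=> j /Hsub; rewrite mem_filter mem_iota add0n andbC.
      apply: (route (h:=h) (s:=A1) (ws:=ws1) (b:=B1) (sel:=sel)) => //.
      * by move=> k /HselP /andP [].
      * have [l [v Hlv]] : exists l v, hfun (nth (@temp 1) ws1 p ord0) l = Some v.
          apply: NNPP => Hne; apply: Hnot; rewrite -Hnp.
          apply: (irel_up (Hirel p Hp)) => k l v; rewrite (ord1 k) => E.
          exfalso; apply: Hne; by exists l, v.
        apply: (star_intro (p:=f1) (q:=nth (@temp 1) ws1 p)).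
        - exact: Hf1.
        - apply: (@N1_intro 1 eta rho _ l v); apply: ord1_all; exact: Hlv.
        - apply: Had; by rewrite Hsz.
        - apply: rest_keep => // j Hj; apply: tdisj_sym; apply: Had; rewrite Hsz.
          by case/andP: (HselP j Hj).
        - apply: rest_keep => //; first by apply: Hws; rewrite Hsz.
          move=> j Hj; case/andP: (HselP j Hj) => Hj1' Hjp.
          apply: Hpd; by rewrite ?Hsz.
Qed.

End Unary.


Definition mkphis (a : seq (seq avar)) i0 i1 :=
  [seq (if i == i0 then phi0 a else if i == i1 then phi1 a else ATrue) | i <- iota 0 (size a)].
Definition mkpsis (a b : seq (seq avar)) j0 j1 sg :=
  [seq (if j == j0 then phi0 a else if j == j1 then psi1 a sg else AFalse) | j <- iota 0 (size b)].

Lemma nth_map_iota (T : Type) (d : T) (f : nat -> T) n i : i < n -> nth d (map f (iota 0 n)) i = f i.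
Proof. by move=> Hi; rewrite (nth_map 0) ?size_iota // nth_iota. Qed.

Lemma size_mkphis a i0 i1 : size (mkphis a i0 i1) = size a.
Proof. by rewrite size_map size_iota. Qed.
Lemma size_mkpsis a b j0 j1 sg : size (mkpsis a b j0 j1 sg) = size b.
Proof. by rewrite size_map size_iota. Qed.

Lemma unary_valid a b i0 i1 j0 j1 sg :
  (forall j, j < size b -> forall x, x \in nth [::] b j -> x \in flatten a) ->
  i0 < size a -> i1 < size a -> i0 <> i1 -> j0 < size b -> j1 < size b -> j0 <> j1 ->
  Pi_ge_Omega a b i0 j1 -> Pi_ge_Omega a b i1 j0 -> Pi_ge_Omega a b i1 j1 ->
  (sg = 0 \/ (0 < sg /\ sg <= size (flatten a) /\
     forall x, x \in nth [::] b j1 -> sg <= count_mem x (nth [::] a i1) - count_mem x (nth [::] b j1))) ->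
  valid_n 1 (lhs (mkphis a i0 i1) a) (rhs (mkpsis a b j0 j1 sg) b).
Proof.
  move=> Hlay Hi0 Hi1 Hi01 Hj0 Hj1 Hj01 H01 H10 H11 Hsg eta rho h.
  move/(lhs_sem _ _ _ (size_mkphis a i0 i1)) => H.
  have H0 := H i0 Hi0; rewrite /mkphis nth_map_iota // eqxx in H0.
  have H1 := H i1 Hi1; rewrite /mkphis nth_map_iota // (introF eqP (nesym Hi01)) eqxx in H1.
  apply/(rhs_sem _ _ _ (size_mkpsis a b j0 j1 sg)).
  have Ej0 : nth AFalse (mkpsis a b j0 j1 sg) j0 = phi0 a by rewrite /mkpsis nth_map_iota // eqxx.
  have Ej1 : nth AFalse (mkpsis a b j0 j1 sg) j1 = psi1 a sg.
    by rewrite /mkpsis nth_map_iota // (introF eqP (nesym Hj01)) eqxx.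
  case: Hsg => [Hz|[Hpos [Hb Hsp]]].
  - case: (unary_N Hlay Hj0 Hj1 H01 H10 H11 H0 H1) => HH.
    + exists j0; split => //; by rewrite Ej0.
    + exists j1; split => //; rewrite Ej1 /psi1 Hz /=; exact: HH.
  - exists j1; split => //; rewrite Ej1 /psi1 Hpos /=.
    exact: (unary_T Hlay Hj0 Hj1 H11 Hpos Hb Hsp H0 H1).
Qed.


Lemma to_nat_loc u : (Pos.to_nat (loc u)).-1 = u.
Proof. by rewrite /loc SuccNat2Pos.id_succ. Qed.

Lemma loc_pred (l : positive) : loc (Pos.to_nat l).-1 = l.
Proof.
  rewrite /loc; apply: SuccNat2Pos.inv; rewrite prednK //.
  by have /ltP := Pos2Nat.is_pos l.
Qed.

Section Cells.
Variable N : nat.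

Lemma cellsN_fin (P : pred nat) : exists b : positive, forall l, (b < l)%positive ->
  (if P (Pos.to_nat l).-1 && ((Pos.to_nat l).-1 < N) then Some 0%Z else None) = None.
Proof.
  exists (Pos.of_succ_nat N) => l Hl.
  have H : N < (Pos.to_nat l).-1.
    move/Pos2Nat.inj_lt: Hl; rewrite SuccNat2Pos.id_succ; move/ltP.
    have := Pos2Nat.is_pos l; move/ltP; lia.
  by rewrite ltnNge (ltnW H) andbF.
Qed.

Definition cellsN (P : pred nat) : heap :=
  @Heap (fun l => if P (Pos.to_nat l).-1 && ((Pos.to_nat l).-1 < N) then Some 0%Z else None)
        (cellsN_fin P).

Lemma cellsN_loc P u : hfun (cellsN P) (loc u) = if P u && (u < N) then Some 0%Z else None.
Proof. by rewrite /= to_nat_loc. Qed.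

Definition o1 : 'I_2 := @Ordinal 2 1 isT.
Definition tp2 (P0 P1 : pred nat) : htuple 2 :=
  fun k => if nat_of_ord k == 0 then cellsN P0 else cellsN P1.

Lemma ord2_cases (k : 'I_2) : k = ord0 \/ k = o1.
Proof. case: k => [[|[|m]] Hm]; [left|right|]; try exact: val_inj; by []. Qed.

Lemma tp2_0 (P0 P1 : pred nat) : tp2 P0 P1 ord0 = cellsN P0. Proof. by []. Qed.
Lemma tp2_1 (P0 P1 : pred nat) : tp2 P0 P1 o1 = cellsN P1. Proof. by []. Qed.

Lemma cellsN_sub (P Q : pred nat) : (forall u, u < N -> P u -> Q u) -> hsub (cellsN P) (cellsN Q).
Proof.
  move=> H l v; rewrite /=; move: (Pos.to_nat l).-1 => u.
  case HP: (P u); case Hl: (u < N) => //= E.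
  by rewrite (H u Hl HP).
Qed.
Lemma tp2_sub (P0 P1 Q0 Q1 : pred nat) : (forall u, u < N -> P0 u -> Q0 u) -> (forall u, u < N -> P1 u -> Q1 u) ->
  tsub (tp2 P0 P1) (tp2 Q0 Q1).
Proof. move=> H0 H1 k; case: (ord2_cases k) => ->; exact: cellsN_sub. Qed.

Lemma cellsN_disj (P Q : pred nat) : (forall u, u < N -> P u -> Q u -> False) -> hdisj (cellsN P) (cellsN Q).
Proof.
  move=> H l; rewrite /=; move: (Pos.to_nat l).-1 => u.
  case HP: (P u); case HQ: (Q u); rewrite /=; try by [left|right].
  case Hl: (u < N); [exfalso; exact: H Hl HP HQ|by left].
Qed.
Lemma tp2_disj (P0 P1 Q0 Q1 : pred nat) : (forall u, u < N -> P0 u -> Q0 u -> False) ->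
  (forall u, u < N -> P1 u -> Q1 u -> False) -> tdisj (tp2 P0 P1) (tp2 Q0 Q1).
Proof. move=> H0 H1 k; case: (ord2_cases k) => ->; exact: cellsN_disj. Qed.

Definition hM : htuple 2 := tp2 predT predT.

Lemma dom_hM (w : htuple 2) k u : tsub w hM -> indom (w k) (loc u) -> u < N.
Proof.
  move=> Hs; rewrite /indom; case E: (hfun _ _) => [v|] // _.
  move: (Hs k _ _ E); case: (ord2_cases k) => ->; rewrite ?tp2_0 ?tp2_1 cellsN_loc /=;
  by case: (u < N).
Qed.

Lemma dom_hM_l (w : htuple 2) k l : tsub w hM -> indom (w k) l -> exists u, u < N /\ l = loc u.
Proof.
  move=> Hs Hl; exists (Pos.to_nat l).-1; split; last by rewrite loc_pred.
  apply: (dom_hM (k:=k) Hs); by rewrite loc_pred.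
Qed.

End Cells.

Lemma disj_conflict (f g : heap) l v : indom f l -> hfun g l = Some v -> hdisj f g -> False.
Proof. rewrite /indom => H E /(_ l); case; [move=> E'; by rewrite E' in H|by rewrite E]. Qed.

Lemma indom_sub (f g : heap) l : hsub f g -> indom f l -> indom g l.
Proof. rewrite /indom => H; case E: (hfun f l) => [v|] //; by rewrite (H _ _ E). Qed.


Section Binary.
Variables (a b : seq (seq avar)) (i0 i1 j0 j1 c y sg : nat).
Local Notation NCa := (NC a).
Local Notation A i := (nth [::] a i).

Definition bx (x : nat) := if x == y then 0 else 1.
Definition tc (x o : nat) := 2 * o + bx x.
Definition RSp : pred nat := fun u => 2 <= u %% 5.
Definition Qp : pred nat := fun u => u %% 5 < 2.

Definition W0 (i k : nat) : pred nat := fun u =>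
  let x := nth 0 (A i) k in let o := occ (A i) k in let t := tc x o in
  if i == i1 then
    (if x == y then (if o < sg then u == 5 * t + 4 else if o == sg then false else u == 5 * t + 3)
     else if x == c then u == 5 * t + 3 else false)
  else if (x == y) || (x == c) then
    (if i == i0 then u == 5 * t else (u == 5 * t + 1) || (u == 5 * t + 2))
  else false.

Definition W1 (i k : nat) : pred nat := fun u =>
  [&& i == i1, nth 0 (A i) k == y, occ (A i) k == sg & (if 0 < sg then u == 4 else RSp u)].

Definition wit (i k : nat) : htuple 2 := tp2 NCa (W0 i k) (W1 i k).

Definition Fph (i : nat) : htuple 2 :=
  if i == i0 then tp2 NCa RSp RSp else if i == i1 then tp2 NCa Qp Qp else tp2 NCa pred0 pred0.

Definition Mem (x : nat) (w : htuple 2) : Prop :=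
  (exists t, t < count_mem x (A i0) /\ indom (w ord0) (loc (5 * (2 * t + bx x)))) \/
  (exists t, indom (w ord0) (loc (5 * (2 * t + bx x) + 1)) /\ indom (w ord0) (loc (5 * (2 * t + bx x) + 2))) \/
  (exists o, o < count_mem x (A i1) /\ ~~ ((x == y) && (o <= sg)) /\ indom (w ord0) (loc (5 * (2 * o + bx x) + 3))) \/
  ((x == y) /\ (if 0 < sg then (exists o, o < sg /\ indom (w ord0) (loc (5 * (2 * o) + 4))) \/ indom (w o1) (loc 4)
                else (forall u, u < NCa -> RSp u -> indom (w o1) (loc u)))).

Lemma Mem_up x (w w' : htuple 2) : Mem x w -> tsub w w' -> Mem x w'.
Proof.
  move=> H Hs; have I0 := fun l => @indom_sub _ _ l (Hs ord0).
  have I1 := fun l => @indom_sub _ _ l (Hs o1).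
  case: H => [[t [Ht H]]|[[t [H1 H2]]|[[o [Ho [Hn H]]]|[Hy H]]]].
  - left; exists t; split => //; exact: I0.
  - right; left; exists t; split; exact: I0.
  - right; right; left; exists o; do 2 split => //; exact: I0.
  - right; right; right; split => //; case: (0 < sg) H => [[[o [Ho H]]|H]|H].
    + left; exists o; split => //; exact: I0.
    + right; exact: I1.
    + move=> u Hu Hr; exact: I1 (H u Hu Hr).
Qed.

Definition relMem x : IRel 2 := @MkIRel 2 (Mem x) (@Mem_up x).
Definition relTop : IRel 2 := @MkIRel 2 (fun _ => True) (fun _ _ H _ => H).
Definition rho2 (x : avar) : IRel 2 := if (x == y) || (x == c) then relMem x else relTop.

Lemma div5 t r : r < 5 -> (5 * t + r) %/ 5 = t.
Proof. move=> Hr; lia. Qed.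

Lemma W0_code i k u : W0 i k u ->
  ((nth 0 (A i) k == y) || (nth 0 (A i) k == c)) /\ u %/ 5 = tc (nth 0 (A i) k) (occ (A i) k).
Proof.
  rewrite /W0; set x := nth 0 (A i) k; set o := occ (A i) k; set t := tc x o.
  case: (i == i1).
  - case: (eqVneq x y) => Hxy /=.
    + case: (o < sg); first by move/eqP ->; rewrite div5.
      case: (o == sg) => //; by move/eqP ->; rewrite div5.
    + case: (eqVneq x c) => // _ /eqP ->; by rewrite div5.
  - case Hyc: ((x == y) || (x == c)) => //; case: (i == i0) => [/eqP ->|/orP [/eqP ->|/eqP ->]];
    by rewrite ?div5 ?muln0 ?addn0 //= -[5 * t]addn0 div5.
Qed.

Lemma bx_le x : bx x <= 1.
Proof. rewrite /bx; by case: (x == y). Qed.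

Lemma W0_inj i k1 k2 u : W0 i k1 u -> W0 i k2 u -> k1 = k2.
Proof.
  move=> /W0_code [H1 E1] /W0_code [H2 E2].
  move: E1; rewrite E2 /tc => E.
  have Hb1 := bx_le (nth 0 (A i) k1); have Hb2 := bx_le (nth 0 (A i) k2).
  have Eo : occ (A i) k1 = occ (A i) k2 by lia.
  have Eb : bx (nth 0 (A i) k2) = bx (nth 0 (A i) k1) by lia.
  apply: (occ_inj (s := A i)) => //.
  move: Eb H1 H2; rewrite /bx.
  case: (eqVneq (nth 0 (A i) k2) y) => [->|N2]; case: (eqVneq (nth 0 (A i) k1) y) => [->|N1] //=.
  by move=> _ /eqP -> /eqP ->.
Qed.

Lemma W1_inj i k1 k2 u : W1 i k1 u -> W1 i k2 u -> k1 = k2.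
Proof.
  rewrite /W1 => /and4P [_ /eqP Ey1 /eqP Eo1 _] /and4P [_ /eqP Ey2 /eqP Eo2 _].
  apply: (occ_inj (s := A i)); by rewrite ?Ey1 ?Ey2 ?Eo1 ?Eo2.
Qed.


Lemma indom_tp2_0 N (P0 P1 : pred nat) u : indom (tp2 N P0 P1 ord0) (loc u) = P0 u && (u < N).
Proof. by rewrite /indom tp2_0 cellsN_loc; case: (P0 u && (u < N)). Qed.
Lemma indom_tp2_1 N (P0 P1 : pred nat) u : indom (tp2 N P0 P1 o1) (loc u) = P1 u && (u < N).
Proof. by rewrite /indom tp2_1 cellsN_loc; case: (P1 u && (u < N)). Qed.

Lemma size_nth_flatten (s : seq (seq nat)) i : size (nth [::] s i) <= size (flatten s).
Proof.
  elim: s i => [|x s IH] [|i] //=; rewrite size_cat; first exact: leq_addr.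
  exact: leq_trans (IH i) (leq_addl _ _).
Qed.

Lemma code_bound i k r : k < size (A i) -> r < 5 ->
  5 * tc (nth 0 (A i) k) (occ (A i) k) + r < NCa.
Proof.
  move=> Hk Hr; have H1 := occ_lt Hk; have H2 := count_size (pred1 (nth 0 (A i) k)) (A i).
  have H3 := size_nth_flatten a i; have H4 := bx_le (nth 0 (A i) k).
  rewrite /tc /NC; move: H1 H2 H3 H4.
  set o := occ _ _; set cc := count _ _; set bb := bx _; set s1 := size (A i); set s2 := size _.
  clearbody o cc bb s1 s2; lia.
Qed.

Lemma wit_mem i k : k < size (A i) -> irel (rho2 (nth 0 (A i) k)) (wit i k).
Proof.
  move=> Hk; rewrite /rho2.
  case Hyc: ((nth 0 (A i) k == y) || (nth 0 (A i) k == c)); last by [].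
  rewrite /= /Mem /wit.
  have Ho := occ_lt Hk.
  have Hb : forall r, r < 5 -> 5 * tc (nth 0 (A i) k) (occ (A i) k) + r < NCa.
    move=> r Hr; exact: code_bound.
  move: Hyc Ho Hb; rewrite /W0 /W1.
  set x := nth 0 (A i) k; set o := occ (A i) k => Hyc Ho Hb.
  case: (eqVneq i i1) => [Ei|Ni].
  - rewrite -Ei /=.
    case: (eqVneq x y) => [Ey|Ny].
    + have Hby : bx x = 0 by rewrite /bx Ey eqxx.
      case: (ltnP o sg) => Hlt.
      * right; right; right; split; first by [].
        have -> : 0 < sg by lia.
        left; exists o; split => //.
        rewrite indom_tp2_0 /=; apply/andP; split; first by rewrite /tc Hby addn0.
        by move: (Hb 4 isT); rewrite /tc Hby addn0.
      * case: (eqVneq o sg) => [Eo|No].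
        - right; right; right; split; first by [].
          case Hs: (0 < sg).
          + right; rewrite -[X in indom _ X]/(loc 4) indom_tp2_1 /NC; apply/andP; split => //; lia.
          + move=> u Hu Hr; rewrite indom_tp2_1 /= Hr Hu; by [].
        - right; right; left; exists o; split; first by rewrite -?Ei.
          split; first by rewrite -ltnNge; lia.
          rewrite indom_tp2_0 /=; apply/andP; split; first by [].
          exact: Hb.
    + have Ec : x == c by move: Hyc; rewrite (negbTE Ny).
      right; right; left; exists o; split; first by rewrite -?Ei.
      split; first by [].
      rewrite indom_tp2_0 /= Ec; apply/andP; split; first by [].
      exact: (Hb 3 isT).
  - rewrite Hyc.
    case: (eqVneq i i0) => [Ei|Ni0].
    + left; exists o; split; first by rewrite -?Ei.
      rewrite indom_tp2_0 /=; apply/andP; split; first by [].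
      by move: (Hb 0 isT); rewrite addn0.
    + right; left; exists o; rewrite !indom_tp2_0 /=.
      split; apply/andP; split; rewrite ?eqxx ?orbT //; [exact: (Hb 1 isT)|exact: (Hb 2 isT)].
Qed.


Lemma wit_pdisj i : pdisj (map (wit i) (iota 0 (size (A i)))).
Proof.
  move=> k1 k2; rewrite size_map size_iota => H1 H2 Hne.
  rewrite !(nth_map 0) ?size_iota // !nth_iota // !add0n.
  apply: tp2_disj => u _ Ha Hb.
  - by move: Hne; rewrite (W0_inj Ha Hb) eqxx.
  - by move: Hne; rewrite (W1_inj Ha Hb) eqxx.
Qed.

Lemma wit_alld i : i0 != i1 -> alld (Fph i) (map (wit i) (iota 0 (size (A i)))).
Proof.
  move=> H01 k; rewrite size_map size_iota => Hk.
  rewrite (nth_map 0) ?size_iota // nth_iota // add0n /Fph /wit.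
  case: (eqVneq i i0) => [Ei|Ni0].
  - apply: tp2_disj => u _ Hr.
    + rewrite /W0 Ei (negbTE H01) /= eqxx.
      case: (_ || _) => //= /eqP Eu; move: Hr; rewrite /RSp Eu; lia.
    + by rewrite /W1 Ei (negbTE H01).
  - case: (eqVneq i i1) => [Ei|Ni1].
    + apply: tp2_disj => u _ Hq.
      * rewrite /W0 Ei eqxx; move: Hq; rewrite /Qp.
        case: (_ == y); [case: (_ < sg); [|case: (_ == sg)]|case: (_ == c)] => //= Hq /eqP Eu;
          move: Hq; rewrite Eu; lia.
      * rewrite /W1 => /and4P [_ _ _]; move: Hq; rewrite /Qp /RSp.
        case: (0 < sg) => /= Hq; [move/eqP => Eu; move: Hq; rewrite Eu|]; lia.
    + apply: tp2_disj => u _; by [].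
Qed.

Lemma Fph_sub i : tsub (Fph i) (hM NCa).
Proof. rewrite /Fph; case: (i == i0); [|case: (i == i1)]; by apply: tp2_sub. Qed.

Lemma wit_sub i k : tsub (wit i k) (hM NCa).
Proof. by apply: tp2_sub. Qed.

Lemma Fph_sem eta i : i < size a -> i0 != i1 -> sem eta rho2 (nth ATrue (mkphis a i0 i1) i) (Fph i).
Proof.
  move=> Hi H01; rewrite /mkphis nth_map_iota // /Fph.
  case: (eqVneq i i0) => [Ei|Ni0].
  - apply: Pl_intro; first exact: uniq_RS.
    move=> u; rewrite mem_filter mem_iota add0n => /andP [Hr Hu] k.
    case: (ord2_cases k) => ->; rewrite ?tp2_0 ?tp2_1 cellsN_loc; by rewrite /RSp Hr Hu.
  - case: (eqVneq i i1) => [Ei|Ni1].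
    + apply: Pl_intro; first exact: uniq_Q.
      move=> u; rewrite mem_filter mem_iota add0n => /andP [Hr Hu] k.
      case: (ord2_cases k) => ->; rewrite ?tp2_0 ?tp2_1 cellsN_loc; by rewrite /Qp Hr Hu.
    + by [].
Qed.

Lemma lhs_bin eta : i0 != i1 -> sem eta rho2 (lhs (mkphis a i0 i1) a) (hM NCa).
Proof.
  move=> H01; apply/(lhs_sem _ _ _ (size_mkphis a i0 i1)) => i Hi.
  apply: (@star_vars_intro 2 eta rho2 _ (A i) (map (wit i) (iota 0 (size (A i)))) (Fph i)).
  - exact: Fph_sem.
  - split; first by rewrite size_map size_iota.
    move=> k Hk; rewrite (nth_map 0) ?size_iota // nth_iota // add0n; exact: wit_mem.
  - exact: wit_pdisj.
  - exact: wit_alld.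
  - exact: Fph_sub.
  - move=> k; rewrite size_map size_iota => Hk; rewrite (nth_map 0) ?size_iota //; exact: wit_sub.
Qed.


Lemma conflict_cell (w g : htuple 2) k u v : tdisj g w -> indom (w k) (loc u) -> hfun (g k) (loc u) = Some v -> False.
Proof. move=> Hd Hi E; apply: (disj_conflict Hi E); move=> l; case: (Hd k l); by [right|left]. Qed.

Lemma nth_psis j : j < size b -> j0 != j1 ->
  nth AFalse (mkpsis a b j0 j1 sg) j =
  if j == j0 then phi0 a else if j == j1 then psi1 a sg else AFalse.
Proof. move=> Hj _; by rewrite /mkpsis nth_map_iota. Qed.

Lemma rhs_bin eta :
  j0 < size b -> j1 < size b -> j0 != j1 ->
  count_mem c (A i0) < count_mem c (nth [::] b j0) ->
  y \in nth [::] b j1 -> sg = count_mem y (A i1) - count_mem y (nth [::] b j1) ->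
  count_mem y (nth [::] b j1) <= count_mem y (A i1) ->
  ~ sem eta rho2 (rhs (mkpsis a b j0 j1 sg) b) (hM NCa).
Proof.
  move=> Hj0 Hj1 Hj01 Hc Hy Hsg Hle.
  move/(rhs_sem _ _ _ (size_mkpsis a b j0 j1 sg)) => [j [Hj H]].
  rewrite nth_psis // in H.
  move: H; case: (eqVneq j j0) => [Ej|Nj0] H.
  -
    rewrite Ej /= in H.
    case/star_vars_elim: H => g [ws [Hg [[Hsz Hirel] [Hpd [Had [Hgh Hws]]]]]].
    have Gc : forall u, u < NCa -> RSp u -> forall k, hfun (g k) (loc u) = Some 0%Z.
      move=> u Hu Hr k; apply: (Pl_elim Hg); rewrite mem_filter; apply/andP; split; [exact: Hr|by rewrite mem_iota add0n].
    pose Pc := pos (nth [::] b j0) c.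
    have Hsub : forall k, k \in Pc -> tsub (nth (@temp 2) ws k) (hM NCa) /\ tdisj g (nth (@temp 2) ws k)
      /\ Mem c (nth (@temp 2) ws k).
      move=> k; rewrite mem_pos => /andP [Hk /eqP Ek]; split; [|split].
      + apply: Hws; by rewrite Hsz.
      + apply: Had; by rewrite Hsz.
      + have := Hirel k Hk; rewrite Ek /rho2 eqxx orbT; by [].
    have := @inj_count Pc (fun k t => indom (nth (@temp 2) ws k ord0) (loc (5 * (2 * t + bx c)))) 0
      (count_mem c (A i0)) (pos_uniq _ _).
    rewrite size_pos => Hcnt; move: Hc; rewrite ltnNge Hcnt //.
    + move=> k Hk; case: (Hsub k Hk) => Hs [Hd Hm].
      have noRS : forall kk u, indom (nth (@temp 2) ws k kk) (loc u) -> RSp u -> False.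
        move=> kk u Hi Hr; have Hu := dom_hM Hs Hi; exact: conflict_cell Hd Hi (Gc u Hu Hr kk).
      case: Hm => [[t [Ht Hi]]|[[t [_ Hi]]|[[o [_ [_ Hi]]]|[_ H4]]]].
      * exists t; split => //; by rewrite add0n.
      * exfalso; apply: (noRS _ _ Hi); rewrite /RSp; lia.
      * exfalso; apply: (noRS _ _ Hi); rewrite /RSp; lia.
      * exfalso; case: (0 < sg) H4 => [[[o [_ Hi]]|Hi]|Hall].
        - apply: (noRS _ _ Hi); rewrite /RSp; lia.
        - by apply: (noRS _ _ Hi).
        - apply: (noRS o1 2); last by []. apply: Hall => //; rewrite /NC; lia.
    + move=> k1 k2 t H1 H2 E1 E2; apply/eqP; apply/negPn/negP => Hne.
      move: H1 H2; rewrite !mem_pos => /andP [Hk1 _] /andP [Hk2 _].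
      have := Hpd k1 k2; rewrite Hsz => /(_ Hk1 Hk2 Hne ord0).
      move/(_ (loc (5 * (2 * t + bx c)))).
      move: E1 E2; rewrite /indom; case: (hfun _ _) => // v1 _; case: (hfun _ _) => // v2 _.
      by case.
  - move: H; case: (eqVneq j j1) => [Ej|Nj1] H; last first.
    + by case/star_vars_elim: H => g [ws [Hg _]].
    rewrite Ej /= in H.
    case/star_vars_elim: H => g [ws [Hg [[Hsz Hirel] [Hpd [Had [Hgh Hws]]]]]].
    pose Py := pos (nth [::] b j1) y.
    have Hsub : forall k, k \in Py -> tsub (nth (@temp 2) ws k) (hM NCa) /\ tdisj g (nth (@temp 2) ws k)
      /\ Mem y (nth (@temp 2) ws k).
      move=> k; rewrite mem_pos => /andP [Hk /eqP Ek]; split; [|split].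
      + apply: Hws; by rewrite Hsz.
      + apply: Had; by rewrite Hsz.
      + have := Hirel k Hk; rewrite Ek /rho2 eqxx; by [].
    have HyB : 0 < count_mem y (nth [::] b j1) by rewrite -has_count has_pred1.
    have Hbxy : bx y = 0 by rewrite /bx eqxx.
    have Hinj : forall k1 k2 o, k1 \in Py -> k2 \in Py ->
        indom (nth (@temp 2) ws k1 ord0) (loc (5 * (2 * o + bx y) + 3)) ->
        indom (nth (@temp 2) ws k2 ord0) (loc (5 * (2 * o + bx y) + 3)) -> k1 = k2.
      move=> k1 k2 o H1 H2 E1 E2; apply/eqP; apply/negPn/negP => Hne.
      move: H1 H2; rewrite !mem_pos => /andP [Hk1 _] /andP [Hk2 _].
      have := Hpd k1 k2; rewrite Hsz => /(_ Hk1 Hk2 Hne ord0).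
      move/(_ (loc (5 * (2 * o + bx y) + 3))).
      move: E1 E2; rewrite /indom; case: (hfun _ _) => // v1 _; case: (hfun _ _) => // v2 _.
      by case.
    have := @inj_count Py (fun k o => indom (nth (@temp 2) ws k ord0) (loc (5 * (2 * o + bx y) + 3)))
      sg.+1 (count_mem y (A i1) - sg.+1) (pos_uniq _ _).
    rewrite size_pos => Hcnt.
    suff : count_mem y (nth [::] b j1) <= count_mem y (A i1) - sg.+1.
      move: HyB Hle; rewrite Hsg.
      set BB := count_mem y (nth [::] b j1); set AA := count_mem y (A i1); clearbody BB AA; lia.
    apply: Hcnt; last by move=> k1 k2 o H1 H2; exact: Hinj.
    move=> k Hk; case: (Hsub k Hk) => Hs [Hd Hm].
    move: Hg; rewrite /psi1; case Hs0: (0 < sg) => Hg.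
    +
      have Gc : forall u, u \in Qcodes a ++ Scodes sg -> forall kk, hfun (g kk) (loc u) = Some 0%Z.
        move=> u Hu kk; exact: (Pl_elim Hg).
      have noQ : forall kk u, indom (nth (@temp 2) ws k kk) (loc u) -> u %% 5 < 2 -> False.
        move=> kk u Hi Hr; have Hu := dom_hM Hs Hi; apply: (conflict_cell Hd Hi (Gc u _ kk)).
        by rewrite mem_cat mem_filter mem_iota add0n Hr Hu.
      have noS : forall kk o, o < sg -> indom (nth (@temp 2) ws k kk) (loc (10 * o + 4)) -> False.
        move=> kk o Ho Hi; apply: (conflict_cell Hd Hi (Gc _ _ kk)).
        rewrite mem_cat; apply/orP; right; apply/mapP; exists o => //; by rewrite mem_iota add0n.
      case: Hm => [[t [_ Hi]]|[[t [Hi _]]|[[o [Ho [Hn Hi]]]|[_ H4]]]].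
      * exfalso; apply: (noQ _ _ Hi); lia.
      * exfalso; apply: (noQ _ _ Hi); lia.
      * exists o; split => //; move: Hn Ho; rewrite eqxx /= -ltnNge; lia.
      * exfalso; move: H4; rewrite Hs0 => -[[o [Ho Hi]]|Hi].
        - apply: (noS _ o Ho); move: Hi; rewrite mulnA; exact.
        - apply: (noS o1 0 Hs0); by rewrite muln0 add0n.
    +
      have Hsg0 : sg = 0 by apply/eqP; rewrite -leqn0 leqNgt Hs0.
      case/star_elim: Hg => p [q [Hp [Hq [Hpq [Hpg Hqg]]]]].
      case: (N1_elim Hq) => l [v Hlv].
      have Hlq : indom (q ord0) l by rewrite /indom Hlv.
      case: (dom_hM_l (tsub_trans Hqg Hgh) Hlq) => u0 [Hu0 El].
      have Hdp : tdisj p (nth (@temp 2) ws k) := tdisj_sub Hpg Hd.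
      have Hdq : tdisj q (nth (@temp 2) ws k) := tdisj_sub Hqg Hd.
      have noQ : forall kk u, indom (nth (@temp 2) ws k kk) (loc u) -> u %% 5 < 2 -> False.
        move=> kk u Hi Hr; have Hu := dom_hM Hs Hi; apply: (conflict_cell Hdp Hi (v:=0%Z)).
        apply: (Pl_elim Hp); by rewrite mem_filter mem_iota add0n Hr Hu.
      case: Hm => [[t [_ Hi]]|[[t [Hi _]]|[[o [Ho [Hn Hi]]]|[_ H4]]]].
      * exfalso; apply: (noQ _ _ Hi); lia.
      * exfalso; apply: (noQ _ _ Hi); lia.
      * exists o; split => //; move: Hn Ho; rewrite eqxx /= -ltnNge; lia.
      * exfalso; move: H4; rewrite Hs0 => Hall.
        have HRS : RSp u0.
          rewrite /RSp leqNgt; apply/negP => Hq0.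
          have Hpu := Pl_elim Hp (u:=u0) _ ord0.
          have : hfun (p ord0) (loc u0) = Some 0%Z by apply: Hpu; rewrite mem_filter mem_iota add0n Hq0 Hu0.
          move=> Ep; apply: (@disj_conflict (p ord0) (q ord0) l v).
          * by rewrite /indom El Ep.
          * exact: Hlv.
          * exact: Hpq.
        have Hi := Hall u0 Hu0 HRS.
        apply: (conflict_cell Hdq Hi (v:=v)); by rewrite -El.
Qed.

End Binary.


Theorem mainTheorem13 (a b : seq (seq avar)) (i0 i1 j0 j1 : nat) :
  0 < size a ->
  (forall j, j < size b -> forall x, x \in nth [::] b j -> x \in flatten a) ->
  i0 < size a -> i1 < size a -> i0 <> i1 ->
  j0 < size b -> j1 < size b -> j0 <> j1 ->
  0 < size (nth [::] b j0) -> 0 < size (nth [::] b j1) ->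
  ~ Pi_ge_Omega a b i0 j0 ->
  Pi_ge_Omega a b i0 j1 ->
  Pi_ge_Omega a b i1 j0 ->
  Pi_ge_Omega a b i1 j1 ->
  exists (phis psis : seq assn),
    size phis = size a /\ size psis = size b /\
    all no_avar phis /\ all no_avar psis /\
    valid_n 1 (lhs phis a) (rhs psis b) /\
    ~ valid_n 2 (lhs phis a) (rhs psis b).
Proof.
  move=> Ha Hlay Hi0 Hi1 Hi01 Hj0 Hj1 Hj01 Hn0 Hn1 Hnot H01 H10 H11.
  have [c Hc] : exists c, count_mem c (nth [::] a i0) < count_mem c (nth [::] b j0).
    apply: NNPP => Hno; apply: Hnot => c _; rewrite leqNgt; apply/negP => H.
    apply: Hno; by exists c.
  have HB1 : nth [::] b j1 != [::] by case: (nth [::] b j1) Hn1.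
  case: (exists_min (fun x => count_mem x (nth [::] a i1) - count_mem x (nth [::] b j1)) HB1)
    => y [Hy Hmin].
  pose sg := count_mem y (nth [::] a i1) - count_mem y (nth [::] b j1).
  have Hle : count_mem y (nth [::] b j1) <= count_mem y (nth [::] a i1).
    apply: H11; exact: Hlay Hj1 y Hy.
  exists (mkphis a i0 i1), (mkpsis a b j0 j1 sg).
  split; first exact: size_mkphis.
  split; first exact: size_mkpsis.
  split.
    rewrite /mkphis all_map; apply/allP => i _ /=.
    case: (i == i0); first exact: no_avar_Pl.
    case: (i == i1); [exact: no_avar_Pl|by []].
  split.
    rewrite /mkpsis all_map; apply/allP => j _ /=.
    case: (j == j0); first exact: no_avar_Pl.
    case: (j == j1) => //; rewrite /psi1; case: (0 < sg) => /=; by rewrite no_avar_Pl.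
  split.
  - apply: unary_valid => //.
    case: (posnP sg) => Hs; [by left|right]; split => //; split.
    + apply: leq_trans (leq_subr _ _) _; apply: leq_trans (count_size _ _) _.
      exact: size_nth_flatten.
    + move=> x Hx; exact: Hmin.
  - move=> Hv.
    have Hlhs := @lhs_bin a i0 i1 c y sg (fun _ => 0%Z) (introN eqP Hi01).
    have := Hv _ _ _ Hlhs.
    apply: (@rhs_bin a b i0 i1 j0 j1 c y sg (fun _ => 0%Z)) => //.
    exact/eqP.
Qed.
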